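(* Consider the setting below and suppose $\|\mathbf{y}\|\le D$ for all $\mathbf{y}\in\mathcal{C}$. Let $\mathbf{y}^*$ be a maximizer of $G$ over $\mathcal{C}$. Then for $t=0,\dots,T$ and any $\beta_t>0$, $$\mathbb{E}[G(\mathbf{y}_{t+1})]\ge \mathbb{E}[G(\mathbf{y}_t)]+\frac1T\mathbb{E}[G(\mathbf{y}^* )-G(\mathbf{y}_t)]-\frac{f_{\max}rD^2}{2T^2}-\frac{1}{2T}\Big(4\beta_tD^2-\frac{\mathbb{E}[\|\nabla G(\mathbf{y}_t)-\mathbf{d}_t\|^2]}{\beta_t}\Big),$$ where $r$ is the rank of the matroid and $f_{\max}=\max_{i\in V}f(\{i\})$.
   Context: Ground set $V=\{1,\dots,n\}$, sets identified with indicator vectors in $\{0,1\}^n$. $z\sim P$ is random; each $f_z:\{0,1\}^n\to\mathbb{R}_+$ is monotone submodular and $f(\mathbf{x})=\mathbb{E}_{z\sim P}[f_z(\mathbf{x})]$. A matroid $(V,\mathcal{I})$ of rank $r$ is given and $\mathcal{C}$ is its matroid polytope (convex hull of indicator vectors of independent sets). $G_z(\mathbf{y})=\mathbb{E}_{\mathbf{x}\sim\mathbf{y}}[f_z(\mathbf{x})]$, where $\mathbf{x}\sim\mathbf{y}$ has independent Bernoulli$(y_i)$ coordinates, is the multilinear relaxation of $f_z$, and $G(\mathbf{y})=\mathbb{E}_z[G_z(\mathbf{y})]$. Stochastic Continuous Greedy: with step sizes $\rho_t>0$, set $\mathbf{d}_0=\mathbf{y}_0=\mathbf{0}$; for $t=1,\dots,T$,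 draw $z_t\sim P$, set $\mathbf{d}_t=(1-\rho_t)\mathbf{d}_{t-1}+\rho_t\nabla G_{z_t}(\mathbf{y}_t)$, choose $\mathbf{v}_t\in\arg\max_{\mathbf{v}\in\mathcal{C}}\mathbf{d}_t^\top\mathbf{v}$, and set $\mathbf{y}_{t+1}=\mathbf{y}_t+\frac1T\mathbf{v}_t$. *)

(* Defs.v *)
From HB Require Import structures.
From mathcomp Require Import all_boot all_order all_algebra.
From mathcomp Require Import all_classical all_reals all_analysis.
Set Implicit Arguments. Unset Strict Implicit. Unset Printing Implicit Defensive.
Import Order.TTheory GRing.Theory Num.Theory.
Local Open Scope ring_scope.

Section Defs.
Variables (R : realType) (n : nat).

Definition dotv (a b : 'I_n -> R) : R := \sum_(i < n) a i * b i.
Definition normv (a : 'I_n -> R) : R := Num.sqrt (\sum_(i < n) a i ^+ 2).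
Definition indic (S : {set 'I_n}) : 'I_n -> R := fun i => if i \in S then 1 else 0.

Definition is_matroid (I : {set {set 'I_n}}) : Prop :=
  [/\ (finset.set0 : {set 'I_n}) \in I,
      (forall A B : {set 'I_n}, A \in I -> B \subset A -> B \in I) &
      (forall A B : {set 'I_n}, A \in I -> B \in I -> (#|A| < #|B|)%N ->
          exists2 x, x \in B :\: A & x |: A \in I)].

Definition mrank (I : {set {set 'I_n}}) : nat := (\max_(S in I) #|S|)%N.

Definition matroid_polytope (I : {set {set 'I_n}}) : set ('I_n -> R) :=
  fun y => exists lam : {set 'I_n} -> R,
     [/\ (forall S : {set 'I_n}, 0 <= lam S), (forall S : {set 'I_n}, S \notin I -> lam S = 0),
         \sum_(S in I) lam S = 1 &
         y = fun i => \sum_(S in I) lam S * indic S i].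

Definition monotone_sf (f : {set 'I_n} -> R) : Prop :=
  forall A B : {set 'I_n}, A \subset B -> f A <= f B.
Definition submodular (f : {set 'I_n} -> R) : Prop :=
  forall A B : {set 'I_n}, f (A :|: B) + f (A :&: B) <= f A + f B.
Definition nonneg_sf (f : {set 'I_n} -> R) : Prop := forall A, 0 <= f A.

(* multilinear relaxation: E_{x ~ y} f(x), x with independent Bernoulli(y_i) coords *)
Definition multilinear (f : {set 'I_n} -> R) (y : 'I_n -> R) : R :=
  \sum_(S : {set 'I_n}) f S * (\prod_(i in S) y i) * (\prod_(i in ~: S) (1 - y i)).

Definition gradv (F : ('I_n -> R) -> R) (y : 'I_n -> R) : 'I_n -> R :=
  fun i => derive1 (fun s : R => F (fun j => y j + (if j == i then s else 0))) 0.

End Defs.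

Section Stoch.
Variables (R : realType) (n : nat) (dz : measure_display) (Z : measurableType dz)
  (P : probability Z R).
Local Open Scope ereal_scope.

Definition fexp (f : Z -> {set 'I_n} -> R) (S : {set 'I_n}) : R :=
  fine (\int[P]_z (f z S)%:E).
Definition Gexp (f : Z -> {set 'I_n} -> R) (y : 'I_n -> R) : R :=
  fine (\int[P]_z (multilinear (f z) y)%:E).
End Stoch.

Definition mutually_indep (R : realType) (d : measure_display) (Om : measurableType d)
  (Pr : probability Om R) (dz : measure_display) (Z : measurableType dz)
  (z : nat -> Om -> Z) : Prop :=
  forall (s : seq nat) (A : nat -> set Z), uniq s -> (forall i, measurable (A i)) ->
    Pr (\big[setI/setT]_(i <- s) (z i @^-1` A i))%classic = (\prod_(i <- s) Pr (z i @^-1` A i)%classic)%E.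

(* Stochastic Continuous Greedy iterates, with y_1 = 0 and d_0 = 0 *)
Fixpoint scg_y (R : realType) (n : nat) (Om : Type) (T : nat)
  (v : nat -> Om -> 'I_n -> R) (t : nat) (w : Om) : 'I_n -> R :=
  match t with
  | 0 => fun _ => 0
  | 1 => fun _ => 0
  | (t'.+1) as t1 => fun i => scg_y T v t' w i + v t' w i / T%:R
  end.

Fixpoint scg_d (R : realType) (n : nat) (dz : measure_display) (Z : measurableType dz)
  (Om : Type) (f : Z -> {set 'I_n} -> R) (z : nat -> Om -> Z) (rho : nat -> R)
  (y : nat -> Om -> 'I_n -> R) (t : nat) (w : Om) : 'I_n -> R :=
  match t with
  | 0 => fun _ => 0
  | t'.+1 => fun i => (1 - rho t'.+1) * scg_d f z rho y t' w i
                      + rho t'.+1 * gradv (multilinear (f (z t'.+1 w))) (y t'.+1 w) i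
  end.

(* Main.v *)
Require Import Defs.
From HB Require Import structures.
From mathcomp Require Import all_boot all_order all_algebra.
From mathcomp Require Import all_classical all_reals all_analysis.
From mathcomp Require Import measurable_realfun ring lra.
Import Order.TTheory GRing.Theory Num.Theory.
Local Open Scope ring_scope.
Set Implicit Arguments. Unset Strict Implicit. Unset Printing Implicit Defensive.
Section Det.
Variables (R : realType) (n : nat).
Local Notation ML := (@multilinear R n).
Implicit Types (F H : {set 'I_n} -> R) (y w : 'I_n -> R) (j i : 'I_n) (S : {set 'I_n}).

Definition Dl (j : 'I_n) (F : {set 'I_n} -> R) : {set 'I_n} -> R :=
  fun S => F (j |: S) - F (S :\ j).
Definition qq (j : 'I_n) (y : 'I_n -> R) (S : {set 'I_n}) : R :=
  \prod_(i in S) y i * \prod_(i in ~: (j |: S)) (1 - y i).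

Lemma sum_split (g : {set 'I_n} -> R) (j : 'I_n) :
  \sum_(S : {set 'I_n}) g S = \sum_(S : {set 'I_n} | j \notin S) (g (j |: S) + g S).
Proof.
rewrite big_split /= [LHS](bigID (fun S : {set 'I_n} => j \in S)) /=; congr (_ + _).
pose h (S : {set 'I_n}) := if j \in S then S :\ j else j |: S.
have hK : involutive h.
  move=> S; rewrite /h; case: (boolP (j \in S)) => jS.
    rewrite !inE eqxx /=; apply/setP => x; rewrite !inE.
    by case: (eqVneq x j) => [->|].
  by rewrite !inE eqxx /= setU1K.
rewrite (reindex_inj (can_inj hK)) /=.
apply: eq_big => S; rewrite /h; case: (boolP (j \in S)) => jS //=.
all: by rewrite ?inE ?eqxx ?jS //=.
Qed.

Lemma ML_split F y j : ML F y =
  \sum_(S : {set 'I_n} | j \notin S) (y j * F (j |: S) + (1 - y j) * F S) * qq j y S.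
Proof.
rewrite /multilinear (sum_split _ j); apply: eq_bigr => S jS.
rewrite big_setU1 //=.
have e1 : \prod_(i in ~: S) (1 - y i) = (1 - y j) * \prod_(i in ~: (j |: S)) (1 - y i).
  rewrite (bigD1 j) ?inE //=; congr (_ * _); apply: eq_bigl => i.
  by rewrite !inE negb_or andbC.
rewrite e1 /qq; ring.
Qed.

Lemma ML_coord F y j s :
  ML F (fun i => y i + (if i == j then s else 0)) = ML F y + s * ML (Dl j F) y.
Proof.
rewrite !(ML_split _ _ j) mulr_sumr -big_split /=; apply: eq_bigr => S jS.
have -> : qq j (fun i => y i + (if i == j then s else 0)) S = qq j y S.
  rewrite /qq; congr (_ * _); apply: eq_bigr => i iS.
    have ij : i != j by apply/eqP => e; rewrite -e iS in jS.
    by rewrite (negbTE ij) addr0.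
  by move: iS; rewrite !inE negb_or => /andP[ij _]; rewrite (negbTE ij) addr0.
have e1 : j |: (j |: S) = j |: S by rewrite finset.setUA finset.setUid.
have e2 : S :\ j = S.
  by apply/setP => x; rewrite !inE; case: (eqVneq x j) => // ->; rewrite (negbTE jS).
rewrite eqxx /Dl e1 setU1K // e2; ring.
Qed.

Lemma gradv_ML F y i : gradv (ML F) y i = ML (Dl i F) y.
Proof.
rewrite /gradv.
rewrite (_ : (fun s => _) = (fun s => ML F y + s * ML (Dl i F) y)); last first.
  by apply/funext => s; rewrite ML_coord.
rewrite derive1E; move: (ML F y) (ML (Dl i F) y) => a b; apply: derive_val.
have -> : (fun s : R => a + s * b) = cst a + (fun s => b *: s).
  by apply/funext => s; rewrite /= mulrC.
apply: is_derive_eq. by rewrite add0r scaler1.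
Qed.

Lemma ML_lin F H a b y :
  ML (fun S => a * F S + b * H S) y = a * ML F y + b * ML H y.
Proof.
rewrite /multilinear !mulr_sumr -big_split; apply: eq_bigr => S _ /=; ring.
Qed.

Lemma ML0 y : ML (fun _ => 0) y = 0.
Proof. by rewrite /multilinear big1 // => S _; rewrite !mul0r. Qed.

Lemma ML_ge0 F y : (forall S, 0 <= F S) -> (forall i, 0 <= y i <= 1) ->
  0 <= ML F y.
Proof.
move=> F0 y01; apply: sumr_ge0 => S _; rewrite !mulr_ge0 //.
  by apply: prodr_ge0 => i _; case/andP: (y01 i).
by apply: prodr_ge0 => i _; case/andP: (y01 i) => _; rewrite subr_ge0.
Qed.

Definition zpn y w (m : nat) : 'I_n -> R :=
  fun i => y i + (if (i < m)%N then w i else 0).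

Lemma tele_aux F y w m : ML F (zpn y w m) =
  ML F y + \sum_(j : 'I_n | (j < m)%N) w j * ML (Dl j F) (zpn y w j).
Proof.
elim: m => [|m IH].
  have -> : zpn y w 0 = y by apply/funext => i; rewrite /zpn ltn0 addr0.
  by rewrite big_pred0 ?addr0 // => j; rewrite ltn0.
case: (ltnP m n) => hm.
  pose o := Ordinal hm.
  have -> : zpn y w m.+1 = (fun i => zpn y w m i + (if i == o then w o else 0)).
    apply/funext => i; rewrite /zpn ltnS leq_eqVlt.
    case: (boolP (i == o)) => [/eqP -> | ne] /=; first by rewrite eqxx ltnn addr0.
    have ne' : (nat_of_ord i == m) = false by apply/negbTE.
    by rewrite ne' /= addr0.
  rewrite ML_coord IH -addrA; congr (_ + _).
  rewrite [RHS](bigD1 o) /=; last by rewrite ltnSn.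
  rewrite addrC; congr (_ + _); apply: eq_bigl => j /=.
  have -> : (j != o) = (nat_of_ord j != m) by [].
  by rewrite ltnS; case: ltngtP.
have -> : zpn y w m.+1 = zpn y w m.
  apply/funext => i; rewrite /zpn.
  have h1 : (i < m)%N by apply: leq_trans (ltn_ord i) hm.
  by rewrite h1 ltnS ltnW.
rewrite IH; congr (_ + _); apply: eq_bigl => j.
have h1 : (j < m)%N by apply: leq_trans (ltn_ord j) hm.
by rewrite h1 ltnS ltnW.
Qed.

Lemma tele F y w : ML F (fun i => y i + w i) =
  ML F y + \sum_j w j * ML (Dl j F) (zpn y w j).
Proof.
have := tele_aux F y w n.
have -> : zpn y w n = (fun i => y i + w i) by apply/funext => i; rewrite /zpn ltn_ord.
by move=> ->; congr (_ + _); apply: eq_bigl => j; rewrite ltn_ord.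
Qed.

Lemma ML1_0 : ML (fun _ => 1) (fun _ => 0) = 1.
Proof.
rewrite /multilinear (bigD1 finset.set0) //= big_set0.
rewrite big1; last by move=> i _; rewrite subr0.
rewrite big1 ?addr0 ?mul1r //.
move=> S SnE; have [i iS] := set0Pn _ SnE.
by rewrite (bigD1 i) //= !(mul0r, mulr0).
Qed.

Lemma ML1 y : ML (fun _ => 1) y = 1.
Proof.
have := tele (fun _ => 1) (fun _ => 0) y.
have -> : (fun i => 0 + y i) = y by apply/funext => i; rewrite add0r.
move=> ->; rewrite ML1_0 big1 ?addr0 // => j _.
have -> : Dl j (fun _ => 1) = (fun _ => 0) by apply/funext => S; rewrite /Dl subrr.
by rewrite ML0 mulr0.
Qed.

Lemma ML_ge_const F c y : (forall S, c <= F S) -> (forall i, 0 <= y i <= 1) ->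
  c <= ML F y.
Proof.
move=> hc y01.
have h := @ML_ge0 (fun S => 1 * F S + (- c) * 1) y.
rewrite (ML_lin F (fun _ => 1)) ML1 in h.
have h2 : 0 <= 1 * ML F y + - c * 1.
  by apply: h => // S; rewrite mul1r mulr1 subr_ge0.
by rewrite mul1r mulr1 subr_ge0 in h2.
Qed.

Lemma ML_le_const F c y : (forall S, F S <= c) -> (forall i, 0 <= y i <= 1) ->
  ML F y <= c.
Proof.
move=> hc y01.
have h := @ML_ge0 (fun S => (-1) * F S + c * 1) y.
rewrite (ML_lin F (fun _ => 1)) ML1 in h.
have h2 : 0 <= -1 * ML F y + c * 1.
  by apply: h => // S; rewrite mulN1r mulr1 addrC subr_ge0.
by rewrite mulN1r mulr1 addrC subr_ge0 in h2.
Qed.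

Lemma zpn01 y w m : (forall i, 0 <= y i <= 1) -> (forall i, 0 <= w i) ->
  (forall i, y i + w i <= 1) -> forall i, 0 <= zpn y w m i <= 1.
Proof.
move=> y01 w0 yw1 i; rewrite /zpn; case: ifP => _; last by rewrite addr0.
case/andP: (y01 i) => h0 _; by rewrite yw1 andbT addr_ge0.
Qed.

Lemma ML_lower H y w (a : 'I_n -> R) :
  (forall i, 0 <= y i <= 1) -> (forall i, 0 <= w i) -> (forall i, y i + w i <= 1) ->
  (forall j S, a j <= Dl j H S) ->
  ML H y + \sum_j w j * a j <= ML H (fun i => y i + w i).
Proof.
move=> y01 w0 yw1 ha; rewrite tele lerD2l; apply: ler_sum => j _.
apply: ler_wpM2l => //; apply: ML_ge_const => //; exact: zpn01.
Qed.

Lemma ML_upper H y w (b : 'I_n -> R) :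
  (forall i, 0 <= y i <= 1) -> (forall i, 0 <= w i) -> (forall i, y i + w i <= 1) ->
  (forall j S, Dl j H S <= b j) ->
  ML H (fun i => y i + w i) <= ML H y + \sum_j w j * b j.
Proof.
move=> y01 w0 yw1 ha; rewrite tele lerD2l; apply: ler_sum => j _.
apply: ler_wpM2l => //; apply: ML_le_const => //; exact: zpn01.
Qed.

End Det.
Section Det2.
Variables (R : realType) (n : nat).
Local Notation ML := (@multilinear R n).
Implicit Types (F H : {set 'I_n} -> R) (y w : 'I_n -> R) (j i m : 'I_n) (S A : {set 'I_n}).

Lemma DD_diag F m S : Dl m (Dl m F) S = 0.
Proof.
rewrite /Dl.
have e1 : m |: (m |: S) = m |: S by rewrite finset.setUA finset.setUid.
have e2 : (m |: S) :\ m = S :\ m.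
  by apply/setP => x; rewrite !inE; case: (eqVneq x m).
have e3 : m |: (S :\ m) = m |: S.
  by apply/setP => x; rewrite !inE; case: (eqVneq x m).
have e4 : (S :\ m) :\ m = S :\ m.
  by apply/setP => x; rewrite !inE; case: (eqVneq x m).
by rewrite e1 e2 e3 e4 subrr.
Qed.

Lemma DD_expr F i m S : i != m ->
  let A := (S :\ i) :\ m in
  Dl i (Dl m F) S = F (m |: (i |: A)) - F (i |: A) - (F (m |: A) - F A).
Proof.
move=> im A; rewrite /Dl.
have e1 : m |: (i |: S) = m |: (i |: A).
  apply/setP => x; rewrite !inE.
  case: (eqVneq x i) => [->|xi]; first by rewrite orbT.
  by case: (eqVneq x m).
have e2 : (i |: S) :\ m = i |: A.
  apply/setP => x; rewrite !inE.
  case: (eqVneq x i) => [->|xi]; first by rewrite (negbTE im).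
  by case: (eqVneq x m).
have e3 : m |: (S :\ i) = m |: A.
  apply/setP => x; rewrite !inE.
  case: (eqVneq x i) => [->|xi]; first by rewrite (negbTE im).
  by case: (eqVneq x m).
have e4 : (S :\ i) :\ m = A by [].
by rewrite e1 e2 e3 e4.
Qed.

Lemma DD_le0 F i m S : submodular F -> Dl i (Dl m F) S <= 0.
Proof.
move=> hs; case: (eqVneq i m) => [->|im]; first by rewrite DD_diag.
rewrite DD_expr //=; set A := (S :\ i) :\ m.
have hA1 : i \notin A by rewrite !inE eqxx andbF.
have hA2 : m \notin A by rewrite !inE eqxx.
clearbody A.
have := hs (i |: A) (m |: A).
have -> : (i |: A) :|: (m |: A) = m |: (i |: A).
  apply/setP => x; rewrite !inE.
  by case: (x == i); case: (x == m); case: (x \in A).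
have -> : (i |: A) :&: (m |: A) = A.
  apply/setP => x; rewrite !inE.
  case: (eqVneq x i) => [->|xi]; first by rewrite (negbTE im) (negbTE hA1).
  case: (eqVneq x m) => [->|xm] /=; first by rewrite (negbTE hA2).
  by case: (x \in A).
move=> h; lra.
Qed.

Lemma DD_ge F i m S : monotone_sf F -> submodular F -> nonneg_sf F ->
  - F [set m] <= Dl i (Dl m F) S.
Proof.
move=> hm hs h0; case: (eqVneq i m) => [->|im].
  by rewrite DD_diag oppr_le0.
rewrite DD_expr //=; set A := (S :\ i) :\ m.
have hA2 : m \notin A by rewrite !inE eqxx.
clearbody A.
have h1 : F (i |: A) <= F (m |: (i |: A)) by apply: hm; apply/fintype.subsetP => x hx; rewrite in_setU1 hx orbT.
have := hs A [set m].
have -> : A :|: [set m] = m |: A by rewrite finset.setUC.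
have -> : A :&: [set m] = finset.set0.
  apply/setP => x; rewrite !inE.
  by case: (eqVneq x m) => [->|]; rewrite ?(negbTE hA2) ?andbF.
have := h0 finset.set0.
move=> h2 h3; lra.
Qed.

Lemma Dl_ge0 F j S : monotone_sf F -> 0 <= Dl j F S.
Proof.
move=> hm; rewrite /Dl subr_ge0; apply: hm.
apply/fintype.subsetP => x; rewrite !inE => /andP[_ ->]; by rewrite orbT.
Qed.

Lemma sum_tri (w : 'I_n -> R) : (forall i, 0 <= w i) ->
  2 * \sum_(m : 'I_n) \sum_(j : 'I_n | (j < m)%N) w m * w j <= (\sum_(m : 'I_n) w m) ^+ 2.
Proof.
move=> w0.
have E : \sum_(m : 'I_n) \sum_(j : 'I_n | (m < j)%N) w m * w j = \sum_(m : 'I_n) \sum_(j : 'I_n | (j < m)%N) w m * w j.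
  rewrite (eq_bigr (fun m : 'I_n => \sum_(j : 'I_n) (if (m < j)%N then w m * w j else 0))); last first.
    by move=> m _; rewrite big_mkcond.
  rewrite exchange_big /=; apply: eq_bigr => m _; rewrite [RHS]big_mkcond.
  by apply: eq_bigr => j _; case: ifP; rewrite // mulrC.
rewrite expr2 mulr_suml mulr2n mulrDl mul1r -{2}E -big_split /=.
apply: ler_sum => m _; rewrite mulr_sumr.
rewrite [X in _ <= X](bigID (fun j : 'I_n => (j < m)%N)) /= lerD2l.
rewrite [X in _ <= X](bigID (fun j : 'I_n => (m < j)%N)) /=.
rewrite [X in _ <= X + _](eq_bigl (fun j : 'I_n => (m < j)%N)); last first.
  by move=> j /=; case: ltngtP.
rewrite lerDl; apply: sumr_ge0 => j _; exact: mulr_ge0.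
Qed.

Lemma FO F (c : R) y w : monotone_sf F -> submodular F -> nonneg_sf F ->
  0 <= c -> (forall m, F [set m] <= c) ->
  (forall i, 0 <= y i <= 1) -> (forall i, 0 <= w i) -> (forall i, y i + w i <= 1) ->
  ML F y + \sum_(m : 'I_n) w m * ML (Dl m F) y - c / 2 * (\sum_(m : 'I_n) w m) ^+ 2
    <= ML F (fun i => y i + w i).
Proof.
move=> hm hs h0 c0 hc y01 w0 yw1.
have key m : ML (Dl m F) y - c * \sum_(j : 'I_n | (j < m)%N) w j <= ML (Dl m F) (zpn y w m).
  have := @ML_lower _ _ (Dl m F) y (fun j => if (j < m)%N then w j else 0) (fun _ => - c) y01.
  have -> : \sum_(j : 'I_n) (if (j < m)%N then w j else 0) * - c = - (c * \sum_(j : 'I_n | (j < m)%N) w j).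
    rewrite [in RHS]big_mkcond mulr_sumr -sumrN; apply: eq_bigr => j _.
    by case: ifP; rewrite ?mul0r ?mulr0 ?oppr0 // mulrN mulrC.
  apply.
  - by move=> i; case: ifP.
  - move=> i; case: ifP => _; first exact: yw1.
    by rewrite addr0; case/andP: (y01 i).
  - move=> j S; apply: le_trans (DD_ge j m S hm hs h0).
    by rewrite lerN2.
rewrite tele.
have h2 := sum_tri w0.
set X := \sum_(m : 'I_n) \sum_(j : 'I_n | (j < m)%N) w m * w j in h2 *.
have h3 : \sum_(m : 'I_n) w m * ML (Dl m F) y - c * X
   <= \sum_(m : 'I_n) w m * ML (Dl m F) (zpn y w m).
  have -> : c * X = \sum_(m : 'I_n) w m * (c * \sum_(j : 'I_n | (j < m)%N) w j).
    rewrite /X mulr_sumr; apply: eq_bigr => m _; rewrite mulrCA -mulr_sumr //.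
  rewrite -sumrB; apply: ler_sum => m _; rewrite -mulrBr.
  by apply: ler_wpM2l => //; exact: key.
have h4 : 0 <= c / 2 * ((\sum_(m : 'I_n) w m) ^+ 2 - 2 * X).
  by apply: mulr_ge0; [apply: divr_ge0 | rewrite subr_ge0].
move: h3 h4; set S2 := (\sum_(m : 'I_n) w m) ^+ 2; set G := \sum_(m : 'I_n) w m * ML (Dl m F) y.
set T := \sum_(m : 'I_n) w m * _.
move=> h3 h4.
have e : c / 2 * (S2 - 2 * X) = c / 2 * S2 - c * X.
  by field.
rewrite e in h4.
lra.
Qed.

End Det2.
Section Det3.
Variables (R : realType) (n : nat).
Local Notation ML := (@multilinear R n).
Implicit Types (F H : {set 'I_n} -> R) (y w u : 'I_n -> R) (j i m : 'I_n) (S A : {set 'I_n}).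

Lemma sum_mul0 (w : 'I_n -> R) : \sum_(j : 'I_n) w j * (fun _ : 'I_n => (0:R)) j = 0.
Proof. by rewrite big1 // => j _; rewrite mulr0. Qed.

Lemma GI F y u : monotone_sf F -> submodular F -> nonneg_sf F ->
  (forall i, 0 <= y i <= 1) -> (forall i, 0 <= u i <= 1) ->
  ML F u - ML F y <= \sum_(m : 'I_n) u m * ML (Dl m F) y.
Proof.
move=> hm hs h0 y01 u01.
pose M i := Num.max (u i) (y i).
pose w i := M i - y i.
have hw0 i : 0 <= w i by rewrite subr_ge0 le_max lexx orbT.
have hM i : y i + w i = M i by rewrite /w addrC subrK.
have hM1 i : y i + w i <= 1.
  by rewrite hM ge_max; case/andP: (y01 i) => _ ->; case/andP: (u01 i) => _ ->.
have hM' i : u i + (M i - u i) = M i by rewrite addrC subrK.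
have h1 : ML F u <= ML F (fun i => y i + w i).
  have := @ML_lower _ _ F u (fun i => M i - u i) (fun _ => 0) u01.
  rewrite sum_mul0 addr0.
  have -> : (fun i => u i + (M i - u i)) = (fun i => y i + w i).
    by apply/funext => i; rewrite hM hM'.
  apply.
  - by move=> i; rewrite subr_ge0 le_max lexx.
  - by move=> i; rewrite hM' -hM.
  - by move=> j S; exact: Dl_ge0.
have key m : ML (Dl m F) (zpn y w m) <= ML (Dl m F) y.
  have := @ML_upper _ _ (Dl m F) y (fun j => if (j < m)%N then w j else 0) (fun _ => 0) y01.
  rewrite sum_mul0 addr0; apply.
  - by move=> i; case: ifP.
  - move=> i; case: ifP => _; first exact: hM1.
    by rewrite addr0; case/andP: (y01 i).
  - by move=> j S; exact: DD_le0.
have h2 : ML F (fun i => y i + w i) - ML F y <= \sum_(m : 'I_n) w m * ML (Dl m F) y.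
  rewrite tele addrC addKr; apply: ler_sum => m _; apply: ler_wpM2l => //; exact: key.
have h3 : \sum_(m : 'I_n) w m * ML (Dl m F) y <= \sum_(m : 'I_n) u m * ML (Dl m F) y.
  apply: ler_sum => m _; apply: ler_wpM2r.
    by apply: ML_ge_const => // S; exact: Dl_ge0.
  rewrite /w lerBlDr ge_max; case/andP: (y01 m) => y0 _; case/andP: (u01 m) => u0 _.
  by rewrite lerDl y0 lerDr u0.
lra.
Qed.

End Det3.
Section Det4.
Variables (R : realType) (n : nat).
Local Notation ML := (@multilinear R n).
Implicit Types (F H : {set 'I_n} -> R) (y w u v d : 'I_n -> R) (j i m : 'I_n) (S A : {set 'I_n}).

Lemma normv_sq (a : 'I_n -> R) : normv a ^+ 2 = \sum_(i : 'I_n) a i ^+ 2.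
Proof. by rewrite /normv sqr_sqrtr // sumr_ge0 // => i _; exact: sqr_ge0. Qed.

Lemma normv_ge0 (a : 'I_n -> R) : 0 <= normv a.
Proof. exact: sqrtr_ge0. Qed.

Lemma sq_le (x D : R) : 0 <= x -> x <= D -> x ^+ 2 <= D ^+ 2.
Proof. move=> x0 xD; rewrite !expr2; apply: ler_pM => //. Qed.

Lemma young (e x b : R) : 0 < b -> - (b / 2 * x ^+ 2) - (2 * b)^-1 * e ^+ 2 <= e * x.
Proof.
move=> b0; rewrite -subr_ge0.
have -> : e * x - (- (b / 2 * x ^+ 2) - (2 * b)^-1 * e ^+ 2) = (b * x + e) ^+ 2 / (2 * b).
  by field; rewrite gt_eqF.
by apply: divr_ge0; [exact: sqr_ge0 | rewrite mulr_ge0 // ltW].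
Qed.

Lemma main_det F (c r D Tr beta : R) yv v u d :
  monotone_sf F -> submodular F -> nonneg_sf F -> 0 <= c -> (forall m, F [set m] <= c) ->
  0 < Tr -> 0 < beta ->
  (forall i, 0 <= yv i <= 1) -> (forall i, 0 <= v i <= 1) -> (forall i, yv i + v i / Tr <= 1) ->
  (forall i, 0 <= u i <= 1) ->
  (\sum_(i : 'I_n) v i) ^+ 2 <= r * D ^+ 2 ->
  normv v <= D -> normv u <= D ->
  dotv d u <= dotv d v ->
  ML F yv + Tr^-1 * (ML F u - ML F yv) - c * r * D ^+ 2 / (2 * Tr ^+ 2)
   - (2 * Tr)^-1 * (4 * beta * D ^+ 2 + beta^-1 * normv (fun i => ML (Dl i F) yv - d i) ^+ 2)
   <= ML F (fun i => yv i + v i / Tr).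
Proof.
move=> hm hs h0 c0 hc T0 b0 yv01 v01 hyv1 u01 hSV nv nu harg.
set g := fun i => ML (Dl i F) yv.
have w0 i : 0 <= v i / Tr by case/andP: (v01 i) => v0 _; rewrite divr_ge0 // ltW.
have fo := @FO _ _ F c yv (fun i => v i / Tr) hm hs h0 c0 hc yv01 w0 hyv1.
set ti := Tr^-1.
have ti0 : 0 <= ti by rewrite invr_ge0 ltW.
have e1 : \sum_(m : 'I_n) v m / Tr * ML (Dl m F) yv = ti * dotv g v.
  by rewrite /dotv mulr_sumr; apply: eq_bigr => m _; rewrite /g /ti; ring.
have e2 : \sum_(m : 'I_n) v m / Tr = ti * \sum_(i : 'I_n) v i.
  by rewrite mulr_sumr; apply: eq_bigr => m _; rewrite mulrC.
rewrite e1 e2 in fo.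
have gi := GI hm hs h0 yv01 u01.
have e3 : \sum_(m : 'I_n) u m * ML (Dl m F) yv = dotv g u.
  by apply: eq_bigr => m _; rewrite mulrC.
rewrite e3 in gi.
set Y := \sum_(i : 'I_n) (g i - d i) * (v i - u i).
have e4 : dotv g v - dotv g u = dotv d v - dotv d u + Y.
  rewrite /dotv /Y -!sumrB -big_split /=; apply: eq_bigr => i _; ring.
set N := normv (fun i => g i - d i) ^+ 2.
set Qs := \sum_(i : 'I_n) (v i - u i) ^+ 2.
have hY : - (beta / 2 * Qs) - (2 * beta)^-1 * N <= Y.
  rewrite /N normv_sq /Qs mulr_sumr mulr_sumr -sumrN -sumrB; apply: ler_sum => i _.
  exact: young.
have hQ : Qs <= 4 * D ^+ 2.
  have hv2 := sq_le (normv_ge0 v) nv; have hu2 := sq_le (normv_ge0 u) nu.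
  rewrite !normv_sq in hv2 hu2.
  have : Qs <= 2 * \sum_(i : 'I_n) v i ^+ 2 + 2 * \sum_(i : 'I_n) u i ^+ 2.
    rewrite !mulr_sumr -big_split; apply: ler_sum => i _ /=.
    rewrite -subr_ge0.
    have -> : 2 * v i ^+ 2 + 2 * u i ^+ 2 - (v i - u i) ^+ 2 = (v i + u i) ^+ 2 by ring.
    exact: sqr_ge0.
  lra.
have s1 : ti * (- (beta / 2 * (4 * D ^+ 2)) - (2 * beta)^-1 * N) <= ti * Y.
  apply: ler_wpM2l => //; apply: le_trans hY; rewrite lerD2r lerN2.
  by apply: ler_wpM2l => //; rewrite divr_ge0 // ltW.
have s2 : c / 2 * (ti * \sum_(i : 'I_n) v i) ^+ 2 <= c * r * D ^+ 2 / (2 * Tr ^+ 2).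
  have -> : c / 2 * (ti * \sum_(i : 'I_n) v i) ^+ 2 = c / 2 * ti ^+ 2 * (\sum_(i : 'I_n) v i) ^+ 2.
    by ring.
  have -> : c * r * D ^+ 2 / (2 * Tr ^+ 2) = c / 2 * ti ^+ 2 * (r * D ^+ 2).
    by rewrite /ti; field; rewrite gt_eqF.
  apply: ler_wpM2l => //; apply: mulr_ge0; [by rewrite divr_ge0 | exact: sqr_ge0].
have e5 : ti * (- (beta / 2 * (4 * D ^+ 2)) - (2 * beta)^-1 * N)
   = - ((2 * Tr)^-1 * (4 * beta * D ^+ 2 + beta^-1 * N)).
  by rewrite /ti; field; rewrite gt_eqF // gt_eqF.
rewrite e5 in s1.
have s3 : ti * (ML F u - ML F yv + Y) <= ti * dotv g v.
  apply: ler_wpM2l => //; lra.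
have e6 : ti * (ML F u - ML F yv + Y) = ti * (ML F u - ML F yv) + ti * Y by ring.
rewrite e6 in s3.
lra.
Qed.

End Det4.
Section Mat.
Variables (R : realType) (n : nat) (I : {set {set 'I_n}}).

Lemma poly01 (v : 'I_n -> R) : matroid_polytope I v -> forall i, 0 <= v i <= 1.
Proof.
case=> lam [l0 lI l1 ->] i; apply/andP; split.
  by apply: sumr_ge0 => S _; apply: mulr_ge0 => //; rewrite /Defs.indic; case: ifP.
rewrite -l1; apply: ler_sum => S _; rewrite /Defs.indic; case: ifP => _.
  by rewrite mulr1.
by rewrite mulr0.
Qed.

Lemma sum_indic (S : {set 'I_n}) : \sum_(i : 'I_n) Defs.indic R S i = #|S|%:R.
Proof.
rewrite (_ : #|S|%:R = \sum_(i in S) (1:R)); last by rewrite sumr_const.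
by rewrite [RHS]big_mkcond /=.
Qed.

Lemma poly_sum_le (v : 'I_n -> R) (M : R) : matroid_polytope I v ->
  (forall S, S \in I -> #|S|%:R <= M) -> \sum_(i : 'I_n) v i <= M.
Proof.
case=> lam [l0 lI l1 ->] hM.
rewrite exchange_big /=.
rewrite (eq_bigr (fun S => lam S * #|S|%:R)); last first.
  by move=> S _; rewrite -mulr_sumr sum_indic.
apply: le_trans (_ : \sum_(S in I) lam S * M <= M).
  by apply: ler_sum => S SI; apply: ler_wpM2l => //; exact: hM.
by rewrite -mulr_suml l1 mul1r.
Qed.

Lemma poly_sum_ge0 (v : 'I_n -> R) : matroid_polytope I v -> 0 <= \sum_(i : 'I_n) v i.
Proof.
move=> hv; apply: sumr_ge0 => i _; by case/andP: (poly01 hv i).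
Qed.

Lemma indic_poly (S : {set 'I_n}) : S \in I -> matroid_polytope I (Defs.indic R S).
Proof.
move=> SI; exists (fun T => if T == S then 1 else 0); split.
- by move=> T; case: ifP.
- by move=> T TI; case: eqP => // e; rewrite e SI in TI.
- by rewrite (bigD1 S) //= eqxx big1 ?addr0 // => T /andP[_ /negbTE ->].
- apply/funext => i; rewrite (bigD1 S) //= eqxx mul1r big1 ?addr0 //.
  by move=> T /andP[_ /negbTE ->]; rewrite mul0r.
Qed.

Lemma card_leD (D : R) (S : {set 'I_n}) :
  (forall y, matroid_polytope I y -> normv y <= D) -> S \in I -> #|S|%:R <= D ^+ 2.
Proof.
move=> hD SI; have h := hD _ (indic_poly SI).
have := sq_le (normv_ge0 _) h; rewrite normv_sq.
rewrite (eq_bigr (fun i => Defs.indic R S i)) ?sum_indic //.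
by move=> i _; rewrite /Defs.indic; case: ifP; rewrite ?expr1n ?expr0n.
Qed.

Lemma card_le_rank (S : {set 'I_n}) : S \in I -> #|S|%:R <= (mrank I)%:R :> R.
Proof. by move=> SI; rewrite ler_nat /mrank; exact: leq_bigmax_cond. Qed.

Lemma sumv_sq (v : 'I_n -> R) (D : R) : matroid_polytope I v ->
  (forall y, matroid_polytope I y -> normv y <= D) ->
  (\sum_(i : 'I_n) v i) ^+ 2 <= (mrank I)%:R * D ^+ 2.
Proof.
move=> hv hD.
have h0 := poly_sum_ge0 hv.
have h1 := poly_sum_le hv (@card_le_rank).
have h2 := poly_sum_le hv (fun S => @card_leD D S hD).
by rewrite expr2; apply: ler_pM.
Qed.

End Mat.
Section Stoch.
Variables (R : realType) (n : nat) (dz : measure_display) (Z : measurableType dz)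
  (P : probability Z R) (f : Z -> {set 'I_n} -> R).
Hypothesis hf_int : forall S, P.-integrable setT (fun z => (f z S)%:E).
Local Notation F := (fexp P f).

Lemma fexpE S : (\int[P]_z (f z S)%:E)%E = (F S)%:E.
Proof. by rewrite /fexp fineK // integrable_fin_num. Qed.

Lemma Gexp_ML : Gexp P f = multilinear F.
Proof.
apply/funext => y; rewrite /Gexp.
have -> : (fun z => (multilinear (f z) y)%:E) = (fun z => (\sum_(S : {set 'I_n})
    ((\prod_(i in S) y i * \prod_(i in ~: S) (1 - y i))%:E * (f z S)%:E))%E).
  apply/funext => z; under eq_bigr do rewrite -EFinM.
  rewrite sumEFin /multilinear; congr EFin; apply: eq_bigr => S _; ring.
rewrite integral_sum //; last by move=> S; apply: integrableZl.
under eq_bigr => S _ do rewrite (integralZl measurableT (hf_int S)) fexpE -EFinM.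
rewrite sumEFin /= /multilinear; apply: eq_bigr => S _; ring.
Qed.

Lemma fexp_nonneg : (forall z, nonneg_sf (f z)) -> nonneg_sf F.
Proof.
move=> h S; rewrite /fexp; apply: fine_ge0; apply: integral_ge0 => z _.
by rewrite lee_fin; apply: h.
Qed.

Lemma fexp_mono : (forall z, monotone_sf (f z)) -> monotone_sf F.
Proof.
move=> h A B AB; have := le_integral measurableT (hf_int A) (hf_int B).
rewrite !fexpE lee_fin; apply => z _; rewrite lee_fin; exact: h.
Qed.

Lemma fexp_sub : (forall z, submodular (f z)) -> submodular F.
Proof.
move=> h A B.
have e1 := @integralD_EFin _ _ _ P setT measurableT (fun z => f z (A :|: B))
  (fun z => f z (A :&: B)) (hf_int _) (hf_int _).
have e2 := @integralD_EFin _ _ _ P setT measurableT (fun z => f z A)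
  (fun z => f z B) (hf_int _) (hf_int _).
have := le_integral measurableT (integrableD measurableT (hf_int (A :|: B)) (hf_int (A :&: B)))
  (integrableD measurableT (hf_int A) (hf_int B)).
rewrite e1 e2 !fexpE -!EFinD lee_fin; apply; move=> z _ /=.
by rewrite -!EFinD lee_fin; exact: h.
Qed.

End Stoch.

Section Om.
Variables (R : realType) (n : nat) (d : measure_display) (Om : measurableType d)
  (Pr : probability Om R).

Lemma meas_prod_in (S : {set 'I_n}) (h : 'I_n -> Om -> R) :
  (forall i, measurable_fun setT (h i)) ->
  measurable_fun setT (fun w => \prod_(i in S) h i w).
Proof.
move=> mh.
rewrite (_ : (fun w => _) = fun w => \prod_(i <- index_enum 'I_n) (if i \in S then h i w else 1)).
  apply: measurable_prod => i _; case: (i \in S); [exact: mh | exact: measurable_cst].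
by apply/funext => w; rewrite big_mkcond.
Qed.

Lemma meas_ML (F : {set 'I_n} -> R) (yy : Om -> 'I_n -> R) :
  (forall i, measurable_fun setT (fun w => yy w i)) ->
  measurable_fun setT (fun w => multilinear F (yy w)).
Proof.
move=> my; rewrite /multilinear; apply: measurable_sum => S.
apply: measurable_funM; first apply: measurable_funM.
- exact: measurable_cst.
- exact: meas_prod_in.
- apply: meas_prod_in => i; apply: measurable_funB => //; exact: measurable_cst.
Qed.

Lemma int_bounded (a : Om -> R) (M : R) : measurable_fun setT a ->
  (forall w, 0 <= a w <= M) -> Pr.-integrable setT (EFin \o a).
Proof.
move=> ma hb; apply/integrableP; split; first exact/measurable_EFinP.
apply: (@le_lt_trans _ _ (\int[Pr]_w (M%:E))%E).
  apply: ge0_le_integral => //.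
  - apply: measurableT_comp => //; exact/measurable_EFinP.
  - move=> w _ /=; case/andP: (hb w) => h0 h1.
    by rewrite lee_fin ger0_norm.
rewrite integral_cst // lte_mul_pinfty //; first by case/andP: (hb point) => h0 h1; apply: le_trans h1.
exact: (le_lt_trans (probability_le1 Pr measurableT) (ltry 1)).
Qed.

Lemma int_nonmeas (m g : Om -> R) : (forall w, 0 <= g w) -> (forall w, m w <= g w) ->
  (\int[Pr]_w (m w)%:E <= \int[Pr]_w (g w)%:E)%E.
Proof.
move=> g0 mg.
rewrite [X in (X <= _)%E]integralE.
apply: (@le_trans _ _ (\int[Pr]_w ((fun w => (m w)%:E)^\+ w))%E).
  rewrite -[X in (_ <= X)%E]sube0; apply: leeB => //.
  by apply: integral_ge0 => w _; exact: funeneg_ge0.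
have hp : forall w, (0 <= (fun w => (m w)%:E)^\+ w)%E by move=> w; exact: funepos_ge0.
have hg : forall w, (0 <= (g w)%:E)%E by move=> w; rewrite lee_fin.
rewrite (ge0_integralTE _ hp) (ge0_integralTE _ hg).
apply: le_ereal_sup => _ [h hh <-]; exists h => // x.
apply: le_trans (hh x) _; rewrite funeposE ge_max !lee_fin g0 mg //.
Qed.

End Om.
Section Fin.
Variables (R : realType) (d : measure_display) (Om : measurableType d)
  (Pr : probability Om R).
Local Open Scope ereal_scope.

Lemma int_cstE (k : R) : \int[Pr]_w (k%:E) = k%:E.
Proof.
rewrite integral_cst //.
transitivity (k%:E * 1); last by rewrite mule1.
by congr (_ * _); exact: probability_setT.
Qed.

Lemma int_lin (a b : Om -> R) (al be ga : R) :
  Pr.-integrable setT (EFin \o a) -> Pr.-integrable setT (EFin \o b) ->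
  \int[Pr]_w ((al * a w + be * b w + ga)%R%:E) =
  (al * fine (\int[Pr]_w (a w)%:E) + be * fine (\int[Pr]_w (b w)%:E) + ga)%R%:E.
Proof.
move=> ia ib.
have ic := finite_measure_integrable_cst Pr ga measurableT.
have ia' := integrableZl measurableT al ia.
have ib' := integrableZl measurableT be ib.
under eq_integral do rewrite EFinD EFinD EFinM EFinM.
rewrite integralD //; last exact: integrableD.
rewrite integralD //.
rewrite integralZl // integralZl // int_cstE.
by rewrite !EFinD !EFinM !fineK // integrable_fin_num.
Qed.

Lemma final_int (a b N : Om -> R) (Gs K C Tr beta : R) :
  (0 < Tr)%R -> (0 < beta)%R ->
  Pr.-integrable setT (EFin \o a) -> Pr.-integrable setT (EFin \o b) ->
  (forall w, 0 <= N w)%R ->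
  (forall w, b w + Tr^-1 * (Gs - b w) - K - (2 * Tr)^-1 * (C + beta^-1 * N w) <= a w)%R ->
  (\int[Pr]_w (a w)%:E >= \int[Pr]_w (b w)%:E + (Tr^-1)%:E * \int[Pr]_w ((Gs - b w)%:E)
     - K%:E - ((2 * Tr)^-1)%:E * (C%:E + (beta^-1)%:E * \int[Pr]_w (N w)%:E)).
Proof.
move=> T0 b0 ia ib N0 pw.
set k := (2 * Tr * beta)%R.
have k0 : (0 < k)%R by rewrite /k !mulr_gt0.
set IA := fine (\int[Pr]_w (a w)%:E).
set IB := fine (\int[Pr]_w (b w)%:E).
pose m w := (k * (b w + Tr^-1 * (Gs - b w) - K - (2 * Tr)^-1 * C - a w))%R.
have mN w : (m w <= N w)%R.
  have h1 : (b w + Tr^-1 * (Gs - b w) - K - (2 * Tr)^-1 * C - a w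
             <= (2 * Tr)^-1 * beta^-1 * N w)%R.
    move: (pw w); rewrite mulrDr => h.
    have e : ((2 * Tr)^-1 * (beta^-1 * N w) = (2 * Tr)^-1 * beta^-1 * N w)%R by rewrite mulrA.
    lra.
  have := ler_wpM2l (ltW k0) h1.
  have -> : (k * ((2 * Tr)^-1 * beta^-1 * N w) = N w)%R.
    by rewrite /k; field; rewrite !gt_eqF.
  done.
have hm := int_nonmeas Pr N0 mN.
have em : \int[Pr]_w (m w)%:E =
    ((- k) * IA + (k * (1 - Tr^-1)) * IB + k * (Tr^-1 * Gs - K - (2 * Tr)^-1 * C))%R%:E.
  rewrite -int_lin //; apply: eq_integral => w _; congr EFin; rewrite /m; ring.
rewrite em in hm.
have eA : \int[Pr]_w (a w)%:E = IA%:E by rewrite /IA fineK // integrable_fin_num.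
have eB : \int[Pr]_w (b w)%:E = IB%:E by rewrite /IB fineK // integrable_fin_num.
have eC : \int[Pr]_w ((Gs - b w)%:E) = (Gs - IB)%R%:E.
  have := int_lin (b := a) (-1) 0 Gs ib ia.
  under eq_integral do rewrite mul0r addr0 mulN1r addrC.
  by move=> ->; rewrite mul0r addr0 mulN1r addrC.
rewrite eA eB eC.
have : (0 <= \int[Pr]_w (N w)%:E) by apply: integral_ge0 => w _; rewrite lee_fin.
case: (\int[Pr]_w (N w)%:E) hm => [XN | |] hm hX //.
  rewrite -!EFinM -!EFinD lee_fin.
  rewrite lee_fin in hm.
  have e : ((2 * Tr)^-1 * beta^-1 * XN = k^-1 * XN)%R by rewrite /k; field; rewrite !gt_eqF.
  have h2 : (- k * IA + k * (1 - Tr^-1) * IB + k * (Tr^-1 * Gs - K - (2 * Tr)^-1 * C)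
     = k * (IB + Tr^-1 * (Gs - IB) - K - (2 * Tr)^-1 * C - IA))%R by ring.
  rewrite h2 in hm.
  have h3 : (IB + Tr^-1 * (Gs - IB) - K - (2 * Tr)^-1 * C - IA <= k^-1 * XN)%R.
    by rewrite -(ler_pM2l k0) mulrA divff ?gt_eqF // mul1r.
  have e2 : ((2 * Tr)^-1 * (C + beta^-1 * XN) = (2 * Tr)^-1 * C + k^-1 * XN)%R.
    by rewrite /k; field; rewrite !gt_eqF.
  rewrite e2; lra.
rewrite (gt0_muley (x := (beta^-1)%:E)); last by rewrite lte_fin invr_gt0.
rewrite addey // gt0_muley; last by rewrite lte_fin invr_gt0 mulr_gt0.
by rewrite addeNy leNye.
Qed.

End Fin.
Section Ylem.
Variables (R : realType) (n : nat) (d : measure_display) (Om : measurableType d).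
Variables (T : nat) (v : nat -> Om -> 'I_n -> R).

Lemma scg_yS t w : (1 <= t)%N ->
  scg_y T v t.+1 w = (fun i => scg_y T v t w i + v t w i / T%:R).
Proof. by case: t. Qed.

Lemma y_meas : (forall t i, measurable_fun setT (fun w => v t w i)) ->
  forall t i, measurable_fun setT (fun w => scg_y T v t w i).
Proof.
move=> hv [|t]; first by move=> i; exact: measurable_cst.
elim: t => [|t IH] i; first exact: measurable_cst.
have -> : (fun w => scg_y T v t.+2 w i) =
  (fun w => scg_y T v t.+1 w i + v t.+1 w i / T%:R).
  by apply/funext => w; rewrite scg_yS.
apply: measurable_funD; first exact: IH.
by apply: measurable_funM; [exact: hv | exact: measurable_cst].
Qed.

Lemma y_bound (I : {set {set 'I_n}}) :
  (forall t w, (1 <= t <= T)%N -> matroid_polytope I (v t w)) -> (0 < T)%N ->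
  forall w t, (1 <= t <= T.+1)%N -> forall i,
    0 <= scg_y T v t w i <= (t.-1)%:R / T%:R.
Proof.
move=> hp hT w; elim=> [//|t IH].
case: t IH => [|t] IH ht i; first by rewrite /= mul0r lexx.
rewrite scg_yS //.
have ht1 : (1 <= t.+1 <= T.+1)%N by case/andP: ht => _ h; rewrite /= ltnW.
have ht2 : (1 <= t.+1 <= T)%N by case/andP: ht.
case/andP: (IH ht1 i) => y0 y1.
case/andP: (poly01 (hp _ w ht2) i) => v0 v1.
have T0 : (0 : R) < T%:R by rewrite ltr0n.
apply/andP; split.
  by rewrite addr_ge0 // divr_ge0 // ltW.
rewrite /= -[t.+1]addn1 natrD mulrDl.
apply: lerD => //; by rewrite ler_pM2r ?invr_gt0 // addn1.
Qed.

End Ylem.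
Unset Implicit Arguments.

Theorem lemma3 (R : realType) (n : nat)
  (* the random index z ~ P *)
  (dz : measure_display) (Z : measurableType dz) (P : probability Z R)
  (* the functions f_z, z in Z *)
  (f : Z -> {set 'I_n} -> R)
  (hf_nonneg : forall z, nonneg_sf (f z))
  (hf_mono : forall z, monotone_sf (f z))
  (hf_sub : forall z, submodular (f z))
  (hf_meas : forall S, measurable_fun setT (fun z => f z S))
  (hf_int : forall S, P.-integrable setT (fun z => (f z S)%:E))
  (* the matroid and its polytope C *)
  (I : {set {set 'I_n}}) (hI : is_matroid I)
  (D : R) (hD : forall y, matroid_polytope I y -> normv y <= D)
  (ystar : 'I_n -> R) (hystar_in : matroid_polytope I ystar)
  (hystar_max : forall y, matroid_polytope I y -> Gexp P f y <= Gexp P f ystar)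
  (* the underlying probability space of the algorithm and samples z_1, z_2, ... *)
  (d : measure_display) (Om : measurableType d) (Pr : probability Om R)
  (z : nat -> Om -> Z)
  (hz_meas : forall t, measurable_fun setT (z t))
  (hz_law : forall t (A : set Z), measurable A -> Pr (z t @^-1` A)%classic = P A)
  (hz_indep : mutually_indep Pr z)
  (* horizon, step sizes, and the linear-maximization choices v_t *)
  (T : nat) (hT : (0 < T)%N)
  (rho : nat -> R) (hrho : forall t, 0 < rho t)
  (v : nat -> Om -> 'I_n -> R)
  (hv_meas : forall t i, measurable_fun setT (fun w => v t w i))
  (hv_argmax : forall t w, (1 <= t <= T)%N ->
     let dt := scg_d f z rho (scg_y T v) t w in
     matroid_polytope I (v t w) /\
     (forall u, matroid_polytope I u -> dotv dt u <= dotv dt (v t w)))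
  (t : nat) (ht : (1 <= t <= T)%N) (beta : R) (hbeta : 0 < beta) :
  let y := scg_y T v in
  let dd := scg_d f z rho y in
  let G := Gexp P f in
  let r := mrank I in
  let fmax := \big[Num.max/0]_(i < n) fexp P f [set i] in
  (\int[Pr]_w (G (y t.+1 w))%:E >=
     \int[Pr]_w (G (y t w))%:E
     + (T%:R^-1)%:E * \int[Pr]_w ((G ystar - G (y t w))%:E)
     - (fmax * r%:R * D ^+ 2 / (2 * T%:R ^+ 2))%:E
     - ((2 * T%:R)^-1)%:E *
         ((4 * beta * D ^+ 2)%:E
          + (beta^-1)%:E * \int[Pr]_w ((normv (fun i => gradv G (y t w) i - dd t w i)) ^+ 2)%:E))%E.
Proof.
cbv zeta.
set F := fexp P f.
set fmax := \big[Num.max/0]_(i < n) F [set i].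
set G := Gexp P f.
set y := scg_y T v.
set r := mrank I.
set dd := scg_d f z rho y.
have hG : G = multilinear F by rewrite /G; exact: Gexp_ML.
have hFm : monotone_sf F by exact: fexp_mono.
have hFs : submodular F by exact: fexp_sub.
have hFn : nonneg_sf F by exact: fexp_nonneg.
have hc0 : 0 <= fmax.
  rewrite /fmax; apply: (big_ind (fun x : R => 0 <= x)) => //.
  by move=> a b a0 b0; rewrite le_max a0.
have hc m : F [set m] <= fmax.
  by rewrite /fmax (bigD1 m) //= le_max lexx.
have T0 : (0 : R) < T%:R by rewrite ltr0n.
have hvp : forall t w, (1 <= t <= T)%N -> matroid_polytope I (v t w).
  by move=> t' w h; case: (hv_argmax t' w h).
have yb := y_bound hvp hT.
have ht1 : (1 <= t <= T.+1)%N by case/andP: ht => -> h; rewrite ltnW.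
have ht2 : (1 <= t.+1 <= T.+1)%N by case/andP: ht.
have y01 w tt : (1 <= tt <= T.+1)%N -> forall i, 0 <= y tt w i <= 1.
  move=> htt i; case/andP: (yb w tt htt i) => -> h /=; apply: le_trans h _.
  rewrite ler_pdivrMr // mul1r ler_nat; case/andP: htt => _.
  by case: (tt).
have hb w tt : (1 <= tt <= T.+1)%N ->
    0 <= G (y tt w) <= multilinear F (fun _ => 1).
  move=> htt; rewrite hG; apply/andP; split; first exact: ML_ge0 (y01 w tt htt).
  have := @ML_lower _ _ F (y tt w) (fun i => 1 - y tt w i) (fun _ => 0) (y01 w tt htt).
  rewrite sum_mul0 addr0.
  have -> : (fun i => y tt w i + (1 - y tt w i)) = (fun _ => 1).
    by apply/funext => i; rewrite addrC subrK.
  apply.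
  - by move=> i; case/andP: (y01 w tt htt i) => _; rewrite subr_ge0.
  - by move=> i; rewrite addrC subrK.
  - by move=> j S; exact: Dl_ge0.
have hmeas tt : measurable_fun setT (fun w => G (y tt w)).
  rewrite hG; apply: meas_ML; exact: y_meas.
have hint tt : (1 <= tt <= T.+1)%N -> Pr.-integrable setT (EFin \o (fun w => G (y tt w))).
  by move=> htt; apply: int_bounded (hmeas tt) _ => w; exact: hb.
apply: final_int => //.
- exact: hint.
- exact: hint.
- by move=> w; exact: sqr_ge0.
move=> w.
have e1 : (fun i => gradv G (y t w) i - dd t w i) =
    (fun i => multilinear (Dl i F) (y t w) - dd t w i).
  by apply/funext => i; rewrite hG gradv_ML.
have ey : y t.+1 w = (fun i => y t w i + v t w i / T%:R).
  by rewrite /y scg_yS //; case/andP: ht.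
rewrite e1 hG ey.
apply: main_det => //.
- exact: y01 w t ht1.
- exact: poly01 (hvp t w ht).
- by move=> i; have := y01 w t.+1 ht2 i; rewrite ey; case/andP.
- exact: poly01 hystar_in.
- exact: sumv_sq (hvp t w ht) hD.
- exact: hD _ (hvp t w ht).
- exact: hD _ hystar_in.
- exact: (hv_argmax t w ht).2 _ hystar_in.
Qed.
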